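(* For $\lambda,\mu\in\mathfrak a^*_{\mathbb C}$ let $d_{\lambda,\mu}:G\to\mathbb C$, $d_{\lambda,\mu}(g)=e^{(i\lambda+\rho)H(g)}e^{(i\mu+\rho)H(gw)}$. Then for all $\gamma,g\in G$, $$d_{\lambda,\mu}(\gamma g)=e^{(i\lambda+\rho)\langle\gamma\cdot o,\,\gamma g\cdot eM\rangle}\,e^{(i\mu+\rho)\langle\gamma\cdot o,\,\gamma g\cdot wM\rangle}\,d_{\lambda,\mu}(g).$$
   Context: $G$ is a connected noncompact real semisimple Lie group with finite center, $K$ maximal compact, $X=G/K$, $o=eK$; Iwasawa decomposition $g=k(g)\exp(H(g))n(g)$ with $H(g)\in\mathfrak a$; $M=Z_K(A)$, $M'=N_K(A)$, and $w\in M'$ a representative of the longest Weyl group element; $B=K/M$ with $G$-action $g\cdot kM=k(gk)M$; $\rho$ half the sum of positive restricted roots with multiplicities; horocycle bracket $\langle gK,kM\rangle=-H(g^{-1}k)\in\mathfrak a$; expressions like $(i\lambda+\rho)H(g)$ mean $(i\lambda+\rho)(H(g))$. *)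

(* Defs.v *)
From HB Require Import structures.
From mathcomp Require Import all_boot all_order all_algebra.
From mathcomp Require Import monoid.
From mathcomp Require Import all_classical all_reals all_analysis.
From mathcomp Require Import complex.

Set Implicit Arguments.
Unset Strict Implicit.
Unset Printing Implicit Defensive.

Import Order.TTheory GRing.Theory Num.Theory.
Local Open Scope ring_scope.

Local Open Scope complex_scope.
Definition cexp (R : realType) (z : R[i]) : R[i] :=
  (expR (complex.Re z))%:C *
  ((cos (complex.Im z))%:C + 'i * (sin (complex.Im z))%:C).

(* an element of a_C^* = Hom_R(a, C), given by its real and imaginary parts *)
Definition cdual (R : realType) (V : lmodType R) : Type :=
  ({linear V -> R^o} * {linear V -> R^o})%type.

Definition cdual_ev (R : realType) (V : lmodType R) (l : cdual V) (x : V)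
  : R[i] := (l.1 x) +i* (l.2 x).

Definition ilam_rho (R : realType) (V : lmodType R) (l : cdual V)
  (rho : {linear V -> R^o}) (x : V) : R[i] :=
  'i * cdual_ev l x + (rho x)%:C.

Section Iwasawa.
Local Open Scope group_scope.
Variables (R : realType) (G : groupType) (a : lmodType R).

Definition is_subgroup (S : G -> Prop) : Prop :=
  [/\ S 1, (forall x y, S x -> S y -> S (x * y)) & (forall x, S x -> S x^-1)].

(* Abstract Iwasawa decomposition G = K exp(a) N, with projections
   kI (= k(g)), HI (= H(g)), nI (= n(g)). *)
Definition iwasawa (K N : G -> Prop) (expA : a -> G)
  (kI : G -> G) (HI : G -> a) (nI : G -> G) : Prop :=
  [/\ is_subgroup K /\ is_subgroup N,
      (forall x y : a, expA (x + y)%R = expA x * expA y) /\ injective expA,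
      (forall (x : a) n, N n -> N (expA x * n * (expA x)^-1)),
      (forall g, [/\ K (kI g), N (nI g) & g = kI g * expA (HI g) * nI g]) &
      (forall k (h : a) n, K k -> N n ->
         [/\ kI (k * expA h * n) = k, HI (k * expA h * n) = h
           & nI (k * expA h * n) = n])].

Definition in_normalizer_KA (K : G -> Prop) (expA : a -> G) (w : G) : Prop :=
  K w /\ (forall x : a, exists y : a, w * expA x * w^-1 = expA y).

(* action of G on B = K/M, on representatives: g . kM = k(gk) M *)
Definition actB (kI : G -> G) (g k : G) : G := kI (g * k).

(* horocycle bracket <gK, kM> = - H(g^-1 k) *)
Definition bracket (HI : G -> a) (g k : G) : a := (- HI (g^-1 * k)%g)%R.

End Iwasawa.

Definition d_lm (R : realType) (G : groupType) (a : lmodType R)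
  (HI : G -> a) (w : G) (rho : {linear a -> R^o}) (l m : cdual a) (g : G)
  : R[i] :=
  cexp (ilam_rho l rho (HI g)) * cexp (ilam_rho m rho (HI (g * w)%g)).

(* Main.v *)
Require Import Defs.
From HB Require Import structures.
From mathcomp Require Import all_boot all_order all_algebra.
From mathcomp Require Import monoid.
From mathcomp Require Import all_classical all_reals all_analysis.
From mathcomp Require Import complex.
From mathcomp Require Import ring.
Import Order.TTheory GRing.Theory Num.Theory.
Local Open Scope ring_scope.

Lemma aux_ring (T : comRingType) (A B ca sa cb sb i : T) : i * i = -1 ->
  A * B * ((ca * cb - sa * sb) + i * (sa * cb + ca * sb)) =
  A * (ca + i * sa) * (B * (cb + i * sb)).
Proof.
move=> ii.
transitivity (A * B * (ca * cb + (i * i) * sa * sb + i * (sa * cb + ca * sb))).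
  by rewrite ii; ring.
ring.
Qed.

Lemma cexpD (R : realType) (x y : R[i]) : cexp (x + y) = cexp x * cexp y.
Proof.
case: x => a b; case: y => c d; rewrite /cexp /=.
rewrite expRD cosD sinD !rmorphB !rmorphD !rmorphM /=.
apply: aux_ring.
by rewrite -expr2 sqr_i.
Qed.

Lemma ilamD (R : realType) (V : lmodType R) (l : cdual V) (rho : {linear V -> R^o}) x y :
  ilam_rho l rho (x + y) = ilam_rho l rho x + ilam_rho l rho y.
Proof.
rewrite /ilam_rho /cdual_ev !linearD /= rmorphD /=.
have -> : ((l.1 x + l.1 y) +i* (l.2 x + l.2 y) = (l.1 x +i* l.2 x) + (l.1 y +i* l.2 y))%C by [].
by rewrite mulrDr addrACA.
Qed.

Lemma key (R : realType) (G : groupType) (a : lmodType R)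
  (K N : G -> Prop) (expA : a -> G) (kI : G -> G) (HI : G -> a) (nI : G -> G) :
  iwasawa K N expA kI HI nI ->
  forall gam g : G, HI (gam * g)%g = HI g + bracket HI gam (kI (gam * g)%g).
Proof.
case=> [[[K1 KM KV] [N1 NM NV]] [eD _] conj dec uniq] gam g.
have e0 : expA 0 = 1%g.
  by apply: (@mulgI _ (expA 0)); rewrite mulg1 -eD addr0.
have eN : forall H, (expA H * expA (- H))%g = 1%g.
  by move=> H; rewrite -eD subrr.
have eN' : forall H, ((expA (- H))^-1)%g = expA H.
  by move=> H; rewrite -(mulg1_eq (eN H)) invgK.
set k := kI (gam * g)%g; set H := HI (gam * g)%g; set n := nI (gam * g)%g.
have [Kk Nn dgg] := dec (gam * g)%g.
set y := (gam^-1 * k)%g.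
have [Kk' Nn' dy] := dec y.
set k' := kI y in Kk' dy *; set H' := HI y in dy *; set n' := nI y in Nn' dy *.
have dg : g = (k' * expA (H' + H) * (expA (- H) * n' * (expA (- H))^-1 * n))%g.
  rewrite eN' eD.
  rewrite !mulgA -(mulgA _ (expA H) (expA (- H))) eN mulg1 -dy /y.
  by rewrite -(mulgA gam^-1%g) -(mulgA _ _ n) -dgg mulKg.
have Nn'' : N (expA (- H) * n' * (expA (- H))^-1 * n)%g.
  exact: (NM _ _ (conj _ _ Nn') Nn).
have -> : HI g = H' + H.
  by have [_ h _] := uniq _ (H' + H) _ Kk' Nn''; rewrite -dg in h.
by rewrite /bracket -/y -/H' addrAC subrr add0r.
Qed.

Theorem mainTheorem11 (R : realType) (G : groupType) (a : vectType R)
  (K N : G -> Prop) (expA : a -> G) (kI : G -> G) (HI : G -> a) (nI : G -> G)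
  (w : G) (rho : {linear a -> R^o}) (l m : cdual a) :
  iwasawa K N expA kI HI nI ->
  in_normalizer_KA K expA w ->
  forall gam g : G,
    d_lm HI w rho l m (gam * g)%g =
      cexp (ilam_rho l rho (bracket HI gam (actB kI (gam * g)%g 1%g))) *
      cexp (ilam_rho m rho (bracket HI gam (actB kI (gam * g)%g w))) *
      d_lm HI w rho l m g.
Proof.
move=> iw _ gam g.
have kk := @key _ _ _ _ _ _ _ _ _ iw.
rewrite /d_lm /actB mulg1 (kk gam g) -(mulgA gam g w) (kk gam (g * w)%g).
rewrite mulgA (ilamD _ _ l) (ilamD _ _ m).
rewrite (cexpD _ (ilam_rho l rho (HI g))) (cexpD _ (ilam_rho m rho (HI (g * w)%g))).
move: (cexp _) (cexp _) (cexp _) (cexp _) => x1 x2 x3 x4.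
ring.
Qed.
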